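(* Let $F=\{f_i\}_{i=1}^N$ be a uniform tight frame for an $n$-dimensional Hilbert space $\mathcal{H}_n$ and let $p>1$. Then the canonical dual $S_F^{-1}F=\{S_F^{-1}f_i\}_{i=1}^N$ is a $1$-erasure spectrally optimal dual of $F$, i.e. $S_F^{-1}F\in\zeta_{\mathfrak{R}}^{(1),p}(F)$.
   Context: A uniform tight frame is a frame with $\sum_i|\langle f,f_i\rangle|^2=A\|f\|^2$ for all $f$ (some $A>0$) and all $\|f_i\|$ equal; $S_F$ is the frame operator $S_Ff=\sum_i\langle f,f_i\rangle f_i$. $G=\{g_i\}$ is a dual of $F$ if $f=\sum_i\langle f,f_i\rangle g_i$ for all $f$. For a dual $G$, $\mathrm{AE}_{\mathfrak{R}}^{(1),p}(F,G)=\{\frac1N\sum_{i=1}^N|\langle f_i,g_i\rangle|^p\}^{1/p}$ (the $\ell^p$-average of the spectral radii of the one-erasure error operators $f\mapsto\langle f,f_i\rangle g_i$), and $\zeta_{\mathfrak{R}}^{(1),p}(F)$ is the set of duals minimizing it over all duals of $F$. *)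

(* Defs.v *)
From HB Require Import structures.
From mathcomp Require Import all_boot all_order all_algebra.
From mathcomp Require Import complex.
From mathcomp Require Import reals exp.
Set Implicit Arguments. Unset Strict Implicit. Unset Printing Implicit Defensive.
Import Order.TTheory GRing.Theory Num.Theory.
Local Open Scope ring_scope.

(* The n-dimensional Hilbert space H_n is modelled as C^n = 'rV[R[i]]_n
   with the standard inner product <u, v> = \sum_k u_k * conj(v_k). *)
Section FrameDefs.
Variable R : realType.
Local Notation C := R[i].

Definition inner n (u v : 'rV[C]_n) : C :=
  \sum_(k < n) u ord0 k * conjc (v ord0 k).

Definition cabs (z : C) : R := Num.sqrt (complex.Re z ^+ 2 + complex.Im z ^+ 2).

Definition hnorm n (f : 'rV[C]_n) : R := Num.sqrt (complex.Re (inner f f)).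

Definition tight_frame n N (F : 'I_N -> 'rV[C]_n) : Prop :=
  exists A : R, 0 < A /\
    forall f : 'rV[C]_n,
      \sum_(i < N) cabs (inner f (F i)) ^+ 2 = A * hnorm f ^+ 2.

Definition uniform n N (F : 'I_N -> 'rV[C]_n) : Prop :=
  forall i j, hnorm (F i) = hnorm (F j).

Definition uniform_tight_frame n N (F : 'I_N -> 'rV[C]_n) : Prop :=
  tight_frame F /\ uniform F.

Definition frame_op n N (F : 'I_N -> 'rV[C]_n) (f : 'rV[C]_n) : 'rV[C]_n :=
  \sum_(i < N) inner f (F i) *: F i.

(* the matrix of S_F acting on row vectors: S_F f = f *m frame_mx F *)
Definition frame_mx n N (F : 'I_N -> 'rV[C]_n) : 'M[C]_n :=
  \matrix_(j, l) \sum_(i < N) conjc (F i ord0 j) * F i ord0 l.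

Definition canonical_dual n N (F : 'I_N -> 'rV[C]_n) : 'I_N -> 'rV[C]_n :=
  fun i => F i *m invmx (frame_mx F).

Definition is_dual n N (F G : 'I_N -> 'rV[C]_n) : Prop :=
  forall f : 'rV[C]_n, f = \sum_(i < N) inner f (F i) *: G i.

Definition AE1p (p : R) n N (F G : 'I_N -> 'rV[C]_n) : R :=
  powR (N%:R^-1 * \sum_(i < N) powR (cabs (inner (F i) (G i))) p) p^-1.

Definition zeta1p (p : R) n N (F : 'I_N -> 'rV[C]_n) : ('I_N -> 'rV[C]_n) -> Prop :=
  fun G => is_dual F G /\
    forall G' : 'I_N -> 'rV[C]_n, is_dual F G' -> AE1p p F G <= AE1p p F G'.

End FrameDefs.

Lemma frame_mxE (R : realType) n N (F : 'I_N -> 'rV[R[i]]_n) f :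
  frame_op F f = f *m frame_mx F.
Proof.
apply/rowP=> l; rewrite /frame_op !mxE summxE.
under [RHS]eq_bigr => j _ do rewrite mxE big_distrr.
rewrite [RHS]exchange_big /=; apply: eq_bigr => i _.
rewrite !mxE /inner big_distrl /=; apply: eq_bigr => k _.
by rewrite mulrA.
Qed.

(* Main.v *)
Require Import Defs.
From HB Require Import structures.
From mathcomp Require Import all_boot all_order all_algebra.
From mathcomp Require Import complex.
From mathcomp Require Import reals exp ring lra.
Import Order.TTheory GRing.Theory Num.Theory.
Local Open Scope ring_scope. Local Open Scope complex_scope. Local Open Scope ring_scope.
Set Implicit Arguments. Unset Strict Implicit.
Section S.
Variable R : realType.
Local Notation C := R[i].
Lemma cabs2 (z : C) : ((cabs z) ^+ 2)%:C = z * conjc z.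
Proof.
case: z => a b; rewrite /cabs /= sqr_sqrtr ?addr_ge0 ?sqr_ge0 //.
apply/eqP; rewrite eq_complex /=; apply/andP; split; apply/eqP; ring.
Qed.
Lemma cabs_ge0 (z : C) : 0 <= cabs z. Proof. exact: sqrtr_ge0. Qed.
Lemma cabsE (z : C) : (cabs z)%:C = `|z|.
Proof. by rewrite normc_def. Qed.
Lemma cabs_real (c : R) : 0 <= c -> cabs c%:C = c.
Proof. by move=> c0; rewrite /cabs /= expr0n addr0 sqrtr_sqr ger0_norm. Qed.
Lemma innerDl n (u v w : 'rV[C]_n) : inner (u + v) w = inner u w + inner v w.
Proof. by rewrite /inner -big_split /=; apply: eq_bigr => k _; rewrite mxE mulrDl. Qed.
Lemma innerDr n (u v w : 'rV[C]_n) : inner w (u + v) = inner w u + inner w v.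
Proof. by rewrite /inner -big_split /=; apply: eq_bigr => k _; rewrite mxE rmorphD mulrDr. Qed.
Lemma innerZl n a (u w : 'rV[C]_n) : inner (a *: u) w = a * inner u w.
Proof. by rewrite /inner big_distrr /=; apply: eq_bigr => k _; rewrite mxE mulrA. Qed.
Lemma innerZr n a (u w : 'rV[C]_n) : inner w (a *: u) = conjc a * inner w u.
Proof. by rewrite /inner big_distrr /=; apply: eq_bigr => k _; rewrite mxE rmorphM mulrCA. Qed.
Lemma innerC n (u w : 'rV[C]_n) : inner w u = conjc (inner u w).
Proof. rewrite /inner rmorph_sum; apply: eq_bigr => k _; by rewrite rmorphM /= conjcK mulrC. Qed.
Lemma inner_suml n I (r : seq I) (P : pred I) (u : I -> 'rV[C]_n) w :
  inner (\sum_(i <- r | P i) u i) w = \sum_(i <- r | P i) inner (u i) w.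
Proof.
elim/big_rec2: _ => [|i y1 y2 _ <-]; last by rewrite innerDl.
by rewrite /inner big1 // => k _; rewrite mxE mul0r.
Qed.
Lemma inner_self n (f : 'rV[C]_n) : inner f f = (\sum_(k < n) cabs (f ord0 k) ^+ 2)%:C.
Proof. rewrite rmorph_sum; apply: eq_bigr => k _; by rewrite /= cabs2. Qed.
Lemma hnorm2 n (f : 'rV[C]_n) : (hnorm f ^+ 2)%:C = inner f f.
Proof.
rewrite /hnorm inner_self /= sqr_sqrtr // sumr_ge0 // => k _; exact: sqr_ge0.
Qed.
Lemma inner_frame n N (F : 'I_N -> 'rV[C]_n) f :
  inner (f *m frame_mx F) f = \sum_(i < N) (cabs (inner f (F i)) ^+ 2)%:C.
Proof.
rewrite -frame_mxE /frame_op inner_suml; apply: eq_bigr => i _.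
by rewrite innerZl cabs2 -innerC.
Qed.
Lemma inner_delta n (M : 'M[C]_n) j k : inner (delta_mx 0 j *m M) (delta_mx 0 k) = M j k.
Proof.
rewrite /inner (bigD1 k) //= big1 ?addr0.
  by rewrite -rowE !mxE !eqxx conjc1 mulr1.
by move=> l /negPf lk; rewrite !mxE lk andbF conjc0 mulr0.
Qed.
Lemma quad0 n (M : 'M[C]_n) : (forall f, inner (f *m M) f = 0) -> M = 0.
Proof.
move=> H; apply/matrixP => j k; rewrite mxE.
set e := fun j : 'I_n => delta_mx 0 j : 'rV[C]_n.
have B : forall u v, inner ((u + v) *m M) (u + v) =
   inner (u *m M) u + inner (u *m M) v + inner (v *m M) u + inner (v *m M) v.
  by move=> u v; rewrite mulmxDl !innerDl !innerDr !addrA.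
have Hjj := H (e j); have Hkk := H (e k).
have H1 := H (e j + e k); have H2 := H (e j + 'i%C *: e k).
rewrite B -!scalemxAl !innerZl !innerZr in H2.
rewrite B in H1.
rewrite /e !inner_delta in Hjj Hkk H1 H2.
rewrite Hjj Hkk add0r addr0 in H1.
rewrite Hjj Hkk add0r !mulr0 addr0 in H2.
have ci : conjc 'i%C = - 'i%C :> C.
  by apply/eqP; rewrite eq_complex /= oppr0 !eqxx.
rewrite ci in H2.
have i2 : 'i%C * 'i%C = -1 :> C by rewrite -expr2 sqr_i.
have : (2 * 'i%C) * M j k = 0.
  have -> : (2 * 'i%C) * M j k = 'i%C * (M j k + M k j) - ( - 'i%C * M j k + 'i%C * M k j).
    ring.
  by rewrite H1 H2 mulr0 subr0.
move/eqP; rewrite mulf_eq0 => /orP[|/eqP //].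
rewrite mulf_eq0 => /orP[/eqP|/eqP].
  by move/eqP; rewrite pnatr_eq0.
by move/(congr1 (@complex.Im R)) => /= /eqP; rewrite oner_eq0.
Qed.
Lemma innerBl n (u v w : 'rV[C]_n) : inner (u - v) w = inner u w - inner v w.
Proof. by rewrite innerDl -scaleN1r innerZl mulN1r. Qed.
Lemma inner_deltal n (v : 'rV[C]_n) k : inner (delta_mx 0 k) v = conjc (v ord0 k).
Proof.
rewrite /inner (bigD1 k) //= big1 ?addr0; first by rewrite !mxE !eqxx mul1r.
by move=> l /negPf lk; rewrite !mxE eq_sym lk andbF mul0r.
Qed.
Lemma tight_mx n N (F : 'I_N -> 'rV[C]_n) A :
  (forall f : 'rV[C]_n, \sum_(i < N) cabs (inner f (F i)) ^+ 2 = A * hnorm f ^+ 2) ->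
  frame_mx F = (A%:C)%:M.
Proof.
move=> H; apply/eqP; rewrite -subr_eq0; apply/eqP; apply: quad0 => f.
rewrite mulmxBr innerBl inner_frame mul_mx_scalar innerZl -hnorm2.
by rewrite -rmorph_sum /= H rmorphM subrr.
Qed.
Lemma dual_trace n N (F G : 'I_N -> 'rV[C]_n) :
  is_dual F G -> \sum_(i < N) inner (F i) (G i) = n%:R.
Proof.
move=> H.
have Hk : forall k, \sum_(i < N) conjc (F i ord0 k) * G i ord0 k = 1.
  move=> k; have := congr1 (fun v : 'rV[C]_n => v ord0 k) (H (delta_mx 0 k)).
  rewrite /= mxE summxE !eqxx /= => h; apply: etrans (esym h); apply: eq_bigr => i _.
  by rewrite mxE inner_deltal.
rewrite /inner exchange_big /= -[n in RHS]card_ord -sumr_const.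
apply: eq_bigr => k _; rewrite -[1]conjc1 -(Hk k) rmorph_sum; apply: eq_bigr => i _.
by rewrite /= rmorphM /= conjcK mulrC.
Qed.
End S.

Lemma power_mean (R : realType) N (a : 'I_N -> R) p : (0 < N)%N -> 1 < p ->
  (forall i, 0 <= a i) ->
  N%:R^-1 * \sum_(i < N) a i <= powR (N%:R^-1 * \sum_(i < N) powR (a i) p) p^-1.
Proof.
move=> N0 p1 a0.
set m := N%:R^-1 * _.
have m0 : 0 <= m by rewrite mulr_ge0 ?invr_ge0 ?ler0n ?sumr_ge0.
have p0 : 0 < p by apply: lt_trans p1.
have Nr0 : (0 : R) < N%:R by rewrite ltr0n.
have [->|mpos] := eqVneq m 0; first exact: powR_ge0.
have mp : 0 < m by rewrite lt_def mpos m0.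
set q := p / (p - 1).
have q0 : 0 < q by rewrite divr_gt0 // subr_gt0.
have pq : p^-1 + q^-1 = 1.
  rewrite /q invf_div; field; rewrite ?gt_eqF // subr_gt0 //.
have Y : forall i, a i / m <= powR (a i / m) p / p + (1 - p^-1).
  move=> i; have := @conjugate_powR R (a i / m) 1 p q _ ler01 p0 q0 pq.
  move=> h; have {h} h := h (divr_ge0 (a0 i) (ltW mp)); move: h.
  have -> : 1 - p^-1 = q^-1 by rewrite -pq addrAC subrr add0r.
  by rewrite mulr1 powR1 mul1r.
have S1 : N%:R <= \sum_(i < N) powR (a i / m) p.
  have : \sum_(i < N) a i / m <= \sum_(i < N) (powR (a i / m) p / p + (1 - p^-1)).
    by apply: ler_sum => i _; exact: Y.
  rewrite -mulr_suml big_split /= sumr_const card_ord -mulr_suml.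
  rewrite [X in X <= _ -> _](_ : _ = N%:R); last first.
    rewrite /m invfM invrK mulrCA mulfV ?mulr1 //.
    by move: mpos; rewrite /m mulf_eq0 negb_or => /andP[].
  move=> h.
  have : N%:R * p^-1 <= (\sum_(i < N) powR (a i / m) p) / p.
    move: h; rewrite mulrnBl -[1 *+ N]/(N%:R) => h. 
    rewrite -(lerD2r (N%:R - p^-1 *+ N)); apply: le_trans h; rewrite -mulr_natr; lra.
  by rewrite ler_pM2r ?invr_gt0.
have E : forall i, powR (a i / m) p = powR (a i) p * (powR m p)^-1.
  move=> i; rewrite powRM ?invr_ge0 ?(ltW mp) //; congr (_ * _).
  by rewrite -powR_inv1 ?(ltW mp) // -powRrM mulN1r powRN.
rewrite (eq_bigr _ (fun i _ => E i)) -mulr_suml in S1.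
have mpp : 0 < powR m p by apply: powR_gt0.
have S2 : powR m p <= N%:R^-1 * \sum_(i < N) powR (a i) p.
  move: S1; rewrite ler_pdivlMr // => S1.
  by rewrite ler_pdivlMl.
have := ge0_ler_powR (r := p^-1) _ _ _ S2.
rewrite -powRrM mulfV ?gt_eqF // powRr1 ?(ltW mp) //; apply.
- by rewrite invr_ge0 ltW.
- by rewrite nnegrE ltW.
- by rewrite nnegrE mulr_ge0 ?invr_ge0 ?ler0n ?sumr_ge0 // => i _; apply: powR_ge0.
Qed.

Unset Implicit Arguments. Set Strict Implicit.
Theorem corollary5p2 (R : realType) (n N : nat) (F : 'I_N -> 'rV[R[i]]_n)
  (p : R) :
  uniform_tight_frame F -> 1 < p ->
  zeta1p p F (canonical_dual F).
Proof.
move=> [[A [A0 HA]] Hu] p1.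
have HS := tight_mx HA.
have AC0 : A%:C != 0 :> R[i].
  by apply/eqP => /complexI /eqP; rewrite gt_eqF.
have Aunit : frame_mx F \in unitmx.
  by rewrite HS unitmxE det_scalar unitfE expf_neq0.
have gE : forall i, canonical_dual F i = (A^-1)%:C *: F i.
  move=> i; rewrite /canonical_dual.
  rewrite {1}(_ : F i = ((A^-1)%:C *: F i) *m frame_mx F) ?mulmxK //.
  have AA : A%:C * (A^-1)%:C = 1 :> R[i].
    by rewrite -rmorphM mulfV ?gt_eqF // rmorph1.
  by rewrite HS mul_mx_scalar scalerA AA scale1r.
have dual : is_dual F (canonical_dual F).
  move=> f; rewrite /canonical_dual.
  under eq_bigr do rewrite scalemxAl.
  by rewrite -mulmx_suml -/(frame_op F f) frame_mxE mulmxK.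
split; first exact: dual.
move=> G' HG'.
have [N0|Npos] := posnP N.
  have Z : forall G : 'I_N -> 'rV_n, \sum_(i < N) powR (cabs (inner (F i) (G i))) p = 0.
    by move=> G; apply: big1 => -[i hi]; exfalso; move: hi; rewrite N0.
  by rewrite /AE1p !Z.
pose i0 := Ordinal Npos.
pose c := A^-1 * hnorm (F i0) ^+ 2.
have c0 : 0 <= c.
  by apply: mulr_ge0; [rewrite invr_ge0; exact: ltW | exact: sqr_ge0].
have ic : forall i, inner (F i) (canonical_dual F i) = c%:C.
  by move=> i; rewrite gE innerZr conjc_real -hnorm2 (Hu i i0) -rmorphM.
have NR0 : (N%:R : R) != 0 by rewrite pnatr_eq0 -lt0n.
have p0 : 0 < p by apply: lt_trans p1.
have -> : AE1p p F (canonical_dual F) = c.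
  rewrite /AE1p; under eq_bigr do rewrite ic cabs_real //.
  rewrite sumr_const card_ord -(mulr_natl (powR c p) N) mulKf // -powRrM mulfV ?gt_eqF //.
  by rewrite powRr1.
have hn : c *+ N = n%:R.
  have := dual_trace dual; under eq_bigr do rewrite ic.
  rewrite sumr_const card_ord -rmorphMn -(rmorph_nat (real_complex R)).
  exact: complexI.
have hG : (n%:R : R) <= \sum_(i < N) cabs (inner (F i) (G' i)).
  rewrite -lecR rmorph_sum.
  under eq_bigr do rewrite /= cabsE.
  rewrite rmorph_nat -(dual_trace HG').
  apply: le_trans (ler_norm_sum _ _ _).
  by rewrite real_ler_norm // ?(dual_trace HG') ?realn.
rewrite /AE1p.
have := @power_mean R N (fun i => cabs (inner (F i) (G' i))) p Npos p1 (fun i => cabs_ge0 _).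
apply: le_trans.
by rewrite -(mulKf NR0 c) mulr_natl hn ler_wpM2l // invr_ge0 ler0n.
Qed.
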